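(* For every priority profile $\succ=(\succ_s)_{s\in S}$ in which every $\succ_s$ is a partial order on $I$, there exists $\succ'\in\mathcal{E}(\succ)$ such that $f^{\succ'}\subseteq f^{\succ}$.
   Context: A partial order on $I$ is an asymmetric and transitive relation; a total order is a partial order that is also negatively transitive and complete. School choice setup: $I$ is a finite set of students with $|I|\ge 3$, $S$ a finite set of schools. Each student $i$ has a total order $P_i$ on $S\cup\{\emptyset\}$; $sR_is'$ means $sP_is'$ or $s=s'$. Each school $s$ has capacity $q_s\in\mathbb{Z}_{++}$ and an asymmetric priority relation $\succ_s$ on $I$. A matching $\mu$ assigns each $i$ to $\mu(i)\in S\cup\{\emptyset\}$, $\mu(s)=\{i:\mu(i)=s\}$, $|\mu(s)|\le q_s$. $\mu$ is stable for $\succ$ if it is individually rational ($\mu(i)R_i\emptyset$ for all $i$), non-wasteful ($sP_i\mu(i)$ implies $|\mu(s)|=q_s$) and fair (no $s$, $j\in\mu(s)$, $i\notin\mu(s)$ with $sR_i\mu(i)$ and $(i,j)\in\succ_s$). $\mu$ is Pareto dominated by $\mu'$ if $\mu'(i)R_i\mu(i)$ for all $i$ and $\mu'(i)P_i\mu(i)$ for some $i$. An SOSM for $\succ$ is a stable matching for $\succ$ not Pareto dominated by any stable matching for $\succ$; $f^\succ$ denotes the set of SOSMs for $\succ$. An extension of $\succ_s$ is a total order on $I$ containing $\succ_s$; $\mathcal{E}(\succ)$ is the set of profiles $(\succ'_s)_{s\in S}$ with each $\succ'_s$ an extension of $\succ_s$. *)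

(* Defs.v *)
From mathcomp Require Import all_boot.
Set Implicit Arguments. Unset Strict Implicit. Unset Printing Implicit Defensive.

Definition asymmetric {T : Type} (R : rel T) : Prop :=
  forall x y, R x y -> ~~ R y x.
Definition transitive_rel {T : Type} (R : rel T) : Prop :=
  forall x y z, R x y -> R y z -> R x z.
Definition neg_transitive {T : Type} (R : rel T) : Prop :=
  forall x y z, ~~ R x y -> ~~ R y z -> ~~ R x z.
Definition complete_rel {T : eqType} (R : rel T) : Prop :=
  forall x y, x != y -> R x y || R y x.

Definition partial_order {T : Type} (R : rel T) : Prop :=
  asymmetric R /\ transitive_rel R.
Definition total_order {T : eqType} (R : rel T) : Prop :=
  partial_order R /\ neg_transitive R /\ complete_rel R.

Section SchoolChoice.
Variables (I S : finType).
(* The outside option (emptyset) is [None]; school s is [Some s]. *)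
Variable P : I -> rel (option S).
Variable q : S -> nat.

Definition R_ (i : I) (a b : option S) : bool := P i a b || (a == b).

Definition assigned (mu : I -> option S) (s : S) : {set I} :=
  [set i | mu i == Some s].

Definition is_matching (mu : I -> option S) : Prop :=
  forall s, #|assigned mu s| <= q s.

Definition individually_rational (mu : I -> option S) : Prop :=
  forall i, R_ i (mu i) None.

Definition non_wasteful (mu : I -> option S) : Prop :=
  forall i s, P i (Some s) (mu i) -> #|assigned mu s| = q s.

Definition fair (pr : S -> rel I) (mu : I -> option S) : Prop :=
  ~ (exists s i j, [/\ j \in assigned mu s, i \notin assigned mu s,
                      R_ i (Some s) (mu i) & pr s i j]).

Definition stable (pr : S -> rel I) (mu : I -> option S) : Prop :=
  [/\ is_matching mu, individually_rational mu, non_wasteful mu & fair pr mu].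

Definition pareto_dominated (mu mu' : I -> option S) : Prop :=
  (forall i, R_ i (mu' i) (mu i)) /\ (exists i, P i (mu' i) (mu i)).

(* SOSM: stable and not Pareto dominated by any stable matching;
   [SOSM pr mu] expresses mu \in f^pr *)
Definition SOSM (pr : S -> rel I) (mu : I -> option S) : Prop :=
  stable pr mu /\ ~ (exists mu', stable pr mu' /\ pareto_dominated mu mu').

Definition extension_profile (pr pr' : S -> rel I) : Prop :=
  forall s, total_order (pr' s) /\ (forall i j, pr s i j -> pr' s i j).

End SchoolChoice.

(* Main.v *)
Require Import Defs.
From mathcomp Require Import all_boot zify.
From Stdlib Require Import Classical FunctionalExtensionality.
Set Implicit Arguments. Unset Strict Implicit. Unset Printing Implicit Defensive.

Section Proofs.
Variables (I S : finType) (P : I -> rel (option S)) (q : S -> nat).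
Hypothesis hP : forall i, total_order (P i).

Lemma Pirr i x : ~~ P i x x.
Proof. case: (hP i) => [[ha _] _]; apply/negP => h; by move: (ha _ _ h); rewrite h. Qed.
Lemma Ptr i x y z : P i x y -> P i y z -> P i x z.
Proof. case: (hP i) => [[_ ht] _]; exact: ht. Qed.
Lemma Pas i x y : P i x y -> ~~ P i y x.
Proof. case: (hP i) => [[ha _] _]; exact: ha. Qed.
Lemma notP_R i x y : ~~ P i y x -> R_ P i x y.
Proof.
move=> h; rewrite /R_; case: (eqVneq x y) => [_|ne]; first by rewrite orbT.
rewrite orbF; case: (hP i) => [_ [_ hc]]; move: (hc _ _ ne); by rewrite (negbTE h) orbF.
Qed.
Lemma R_neq i x y : R_ P i x y -> x != y -> P i x y.
Proof. by rewrite /R_ => /orP [//| /eqP ->]; rewrite eqxx. Qed.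
Lemma RP i x y z : R_ P i x y -> P i y z -> P i x z.
Proof. by rewrite /R_ => /orP [h1 h2|/eqP -> //]; apply: Ptr h1 h2. Qed.
Lemma PR i x y z : P i x y -> R_ P i y z -> P i x z.
Proof. by rewrite /R_ => h1 /orP [h2|/eqP <- //]; apply: Ptr h1 h2. Qed.
Lemma PtoR i x y : P i x y -> R_ P i x y.
Proof. by rewrite /R_ => ->. Qed.
Lemma Rrefl i x : R_ P i x x.
Proof. by rewrite /R_ eqxx orbT. Qed.

Definition join (mu nu : I -> option S) i := if P i (nu i) (mu i) then nu i else mu i.

Lemma join_Rmu mu nu i : R_ P i (join mu nu i) (mu i).
Proof. rewrite /join; case: ifP => h; [exact: PtoR | exact: Rrefl]. Qed.
Lemma join_Rnu mu nu i : R_ P i (join mu nu i) (nu i).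
Proof. rewrite /join; case: ifP => h; [exact: Rrefl | apply: notP_R; by rewrite h]. Qed.

Lemma sum_assigned (f : I -> option S) (A : {set I}) :
  \sum_(s : S) #|assigned f s :&: A| = \sum_(i in A) (f i != None).
Proof.
rewrite (eq_bigr (fun s => \sum_(i in A) (f i == Some s))); last first.
  move=> s _; rewrite -sum1_card big_mkcond /= [RHS]big_mkcond /=.
  apply: eq_bigr => i _; rewrite /assigned !inE.
  by case: (f i == Some s); case: (i \in A).
rewrite exchange_big /=; apply: eq_bigr => i _.
case E: (f i) => [s0|] /=.
  rewrite (bigD1 s0) //= eqxx big1 // => s ns.
    by rewrite eq_sym (inj_eq (@Some_inj _)) (negbTE ns).
  by rewrite big1.
Qed.

Lemma sum_le_card (f : I -> option S) (A : {set I}) :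
  \sum_(i in A) (f i != None) <= #|A|.
Proof. rewrite -sum1_card; apply: leq_sum => i _; by case: (f i != None). Qed.

Lemma sum_eq_card (f : I -> option S) (A : {set I}) :
  (forall i, i \in A -> f i != None) -> \sum_(i in A) (f i != None) = #|A|.
Proof. move=> h; rewrite -sum1_card; apply: eq_bigr => i /h ->. by []. Qed.

Lemma sum_le_eq (a b : S -> nat) :
  (forall s, a s <= b s) -> \sum_s b s <= \sum_s a s -> forall s, a s = b s.
Proof.
move=> hab hs s; apply/eqP; rewrite eqn_leq hab /=; rewrite leqNgt; apply/negP => lt.
move: hs; rewrite (bigD1 s) //= [X in _ <= X](bigD1 s) //= => hs.
have : \sum_(i | i != s) a i <= \sum_(i | i != s) b i by apply: leq_sum.
lia.
Qed.

Section Join.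
Variables (Q : S -> rel I) (hQ : forall s, total_order (Q s)).
Variables (mu nu : I -> option S).
Hypothesis (smu : stable P q Q mu) (snu : stable P q Q nu).
Let N := [set i | P i (nu i) (mu i)].

Lemma nu_some i : i \in N -> nu i != None.
Proof.
rewrite inE => h; apply/negP => /eqP E; rewrite E in h.
case: smu => _ ir _ _; have := ir i; move/(RP) => /(_ _ h); by rewrite (negbTE (Pirr _ _)).
Qed.

Lemma cnt_le s : #|assigned nu s :&: N| <= #|assigned mu s :&: N|.
Proof.
case: (eqVneq (assigned nu s :&: N) set0) => [->|/set0Pn [b hb]]; first by rewrite cards0.
  have hb' := hb; rewrite /assigned !inE in hb'; move/andP: hb' => [/eqP nb pb]; rewrite nb in pb.
  case: smu => cmu _ nwmu fmu; case: snu => cnu _ _ fnu.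
  have full := nwmu _ _ pb.
  have c2 := cnu s.
  have sub1 : assigned mu s :\: assigned nu s \subset assigned mu s :&: N.
    apply/subsetP => j; rewrite /assigned !inE => /andP [njn /eqP jm]; rewrite jm eqxx /=.
    case: (boolP (P j (nu j) (Some s))) => // np.
    have Rj := notP_R np.
    have bj : b != j by apply/eqP => E; move: pb; rewrite E jm (negbTE (Pirr _ _)).
    have nq : ~~ Q s b j.
      apply/negP => qbj; apply: fmu; exists s, b, j; split.
      - by rewrite /assigned inE jm.
      - rewrite /assigned inE; apply/negP => /eqP E; move: pb; by rewrite E (negbTE (Pirr _ _)).
      - exact: PtoR.
      - exact: qbj.
    case: (hQ s) => [_ [_ hc]]; move: (hc _ _ bj); rewrite (negbTE nq) /= => qjb.
    exfalso; apply: fnu; exists s, j, b; split => //.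
    - by rewrite /assigned inE nb.
    - by rewrite /assigned inE.
  have sub2 : assigned nu s :&: N \subset assigned nu s :\: assigned mu s.
    apply/subsetP => j; rewrite /assigned !inE => /andP [/eqP jn pj]; rewrite jn eqxx andbT.
    by apply/negP => /eqP E; move: pj; rewrite jn E (negbTE (Pirr _ _)).
  have l1 := subset_leq_card sub1; have l2 := subset_leq_card sub2.
  rewrite !cardsD in l1 l2.
  have : #|assigned nu s :&: assigned mu s| = #|assigned mu s :&: assigned nu s| by rewrite setIC.
  lia.
Qed.

Lemma cnt_eq s : #|assigned nu s :&: N| = #|assigned mu s :&: N|.
Proof.
apply: (@sum_le_eq (fun s => #|assigned nu s :&: N|) (fun s => #|assigned mu s :&: N|)).
  exact: cnt_le.
rewrite !sum_assigned (@sum_eq_card nu); [exact: sum_le_card | exact: nu_some].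
Qed.

Lemma assigned_join s : #|assigned (join mu nu) s| = #|assigned mu s|.
Proof.
have -> : assigned (join mu nu) s = (assigned mu s :\: N) :|: (assigned nu s :&: N).
  apply/setP => i; rewrite /assigned /join !inE.
  by case: (P i (nu i) (mu i)) => /=; rewrite ?andbT ?andbF ?orbF.
rewrite cardsU cardsD.
have -> : (assigned mu s :\: N) :&: (assigned nu s :&: N) = set0.
  apply/setP => i; rewrite !inE; by case: (P i (nu i) (mu i)); rewrite /= ?andbF.
rewrite cards0 cnt_eq.
have : #|assigned mu s :&: N| <= #|assigned mu s| by apply: subset_leq_card; apply: subsetIl.
lia.
Qed.

Lemma join_stable : stable P q Q (join mu nu).
Proof.
case: (smu) => cmu irmu nwmu fmu; case: (snu) => cnu irnu nwnu fnu.
split.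
- by move=> s; rewrite assigned_join.
- move=> i; rewrite /join; case: ifP => _; [exact: irnu | exact: irmu].
- move=> i s h; rewrite assigned_join; apply: nwmu; exact: PR h (join_Rmu _ _ _).
- move=> [s [i [j [jin inot Ri qij]]]].
  have ne : Some s != join mu nu i by move: inot; rewrite /assigned inE; apply: contra => /eqP ->.
  have Pi := R_neq Ri ne.
  have Pm := PR Pi (join_Rmu _ _ _); have Pn := PR Pi (join_Rnu _ _ _).
  move: jin; rewrite /assigned inE /join; case: ifP => _ /eqP js.
  + apply: fnu; exists s, i, j; split => //.
    * by rewrite /assigned inE js.
    * by rewrite /assigned inE; apply/negP => /eqP E; move: Pn; rewrite E (negbTE (Pirr _ _)).
    * exact: PtoR.
  + apply: fmu; exists s, i, j; split => //.
    * by rewrite /assigned inE js.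
    * by rewrite /assigned inE; apply/negP => /eqP E; move: Pm; rewrite E (negbTE (Pirr _ _)).
    * exact: PtoR.
Qed.
End Join.

Lemma stable_weaken (Q Q' : S -> rel I) mu :
  (forall s x y, Q s x y -> Q' s x y) -> stable P q Q' mu -> stable P q Q mu.
Proof.
move=> hQ [c ir nw f]; split => // -[s [i [j [h1 h2 h3 h4]]]].
apply: f; exists s, i, j; split => //; exact: hQ.
Qed.

Definition rk i x := #|[set y | P i x y]|.
Definition Phi (mu : I -> option S) := \sum_i rk i (mu i).

Lemma rk_lt i x y : P i x y -> rk i y < rk i x.
Proof.
move=> pxy; apply: proper_card; apply/properP; split.
  apply/subsetP => z; rewrite !inE => pyz; exact: Ptr pxy pyz.
by exists y; rewrite !inE ?pxy ?(negbTE (Pirr _ _)).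
Qed.

Lemma rk_le i x y : R_ P i x y -> rk i y <= rk i x.
Proof. by rewrite /R_ => /orP [/rk_lt/ltnW //| /eqP ->]. Qed.

Lemma Phi_lt mu nu j : (forall i, R_ P i (nu i) (mu i)) -> P j (nu j) (mu j) -> Phi mu < Phi nu.
Proof.
move=> hR hj; rewrite /Phi (bigD1 j) //= [X in _ < X](bigD1 j) //=.
have : \sum_(i | i != j) rk i (mu i) <= \sum_(i | i != j) rk i (nu i).
  by apply: leq_sum => i _; apply: rk_le.
have := rk_lt hj; lia.
Qed.

Lemma Phi_bound mu : Phi mu <= \sum_(i : I) #|{: option S}|.
Proof. by apply: leq_sum => i _; apply: max_card. Qed.

Lemma exists_max (Q : S -> rel I) mu0 : stable P q Q mu0 ->
  exists mu, stable P q Q mu /\ forall nu, stable P q Q nu -> Phi nu <= Phi mu.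
Proof.
set M := \sum_(i : I) #|{: option S}|.
have key : forall d mu, stable P q Q mu -> M - Phi mu <= d ->
    exists mu, stable P q Q mu /\ forall nu, stable P q Q nu -> Phi nu <= Phi mu.
  elim=> [|d IH] mu smu hd.
    exists mu; split => // nu snu; have := Phi_bound nu; rewrite -/M; lia.
  case: (classic (exists nu, stable P q Q nu /\ Phi mu < Phi nu)) => [[nu [snu lt]]|no].
    apply: (IH nu snu); have := Phi_bound nu; rewrite -/M; lia.
  exists mu; split => // nu snu; rewrite leqNgt; apply/negP => lt; apply: no; by exists nu.
move=> s0; exact: (key _ mu0 s0 (leqnn _)).
Qed.

Section Ext.
Variables (pr : S -> rel I) (hpr : forall s, partial_order (pr s)).
Variable mu : I -> option S.

Definition Dset s := [set i | (mu i != Some s) && R_ P i (Some s) (mu i)].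
Definition Bot s := [set i | [exists d in Dset s, (d == i) || pr s d i]].
Definition hh s x := #|[set y | pr s y x]|.
Definition score s x := ((x \in Bot s) * #|I| + hh s x) * #|I| + enum_rank x.
Definition prx s x y := score s x < score s y.

Lemma hh_lt s x : hh s x < #|I|.
Proof.
rewrite -cardsT; apply: proper_card; apply/properP; split; first exact: subsetT.
exists x; rewrite ?inE //; case: (hpr s) => ha _; apply/negP => h; by move: (ha _ _ h); rewrite h.
Qed.

Lemma score_inj s x y : score s x = score s y -> x = y.
Proof.
move=> E; have : score s x %% #|I| = score s y %% #|I| by rewrite E.
rewrite /score !modnMDl !modn_small ?ltn_ord // => /val_inj; exact: enum_rank_inj.
Qed.

Lemma prx_total s : total_order (prx s).
Proof.
rewrite /prx; split; [split|split].
- by move=> x y h; rewrite -leqNgt ltnW.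
- move=> x y z; exact: ltn_trans.
- move=> x y z; rewrite -!leqNgt => h1 h2; exact: leq_trans h2 h1.
- move=> x y ne; rewrite -neq_ltn; apply: contra ne => /eqP/score_inj ->; by [].
Qed.

Lemma prx_ext s x y : pr s x y -> prx s x y.
Proof.
move=> pxy; case: (hpr s) => ha ht.
have hlt : hh s x < hh s y.
  apply: proper_card; apply/properP; split.
    apply/subsetP => z; rewrite !inE => pzx; exact: ht pzx pxy.
  exists x; rewrite !inE ?pxy //; apply/negP => h; by move: (ha _ _ h); rewrite h.
have hb : x \in Bot s -> y \in Bot s.
  rewrite !inE => /existsP [d /andP [dD /orP [/eqP E|pdx]]].
    apply/existsP; exists d; by rewrite dD E pxy orbT.
  apply/existsP; exists d; by rewrite dD (ht _ _ _ pdx pxy) orbT.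
rewrite /prx /score.
have rx : enum_rank x < #|I| by apply: ltn_ord.
have ry : enum_rank y < #|I| by apply: ltn_ord.
have hx := hh_lt s x; have hy := hh_lt s y.
move: rx ry hx hy hlt; set n := #|I| => rx ry hx hy hlt.
move: hb; case: (x \in Bot s); case: (y \in Bot s) => //= hb; try nia.
Qed.

Lemma mu_stable_prx : stable P q pr mu -> stable P q prx mu.
Proof.
move=> [c ir nw f]; split => // -[s [i [j [jin inot Ri pij]]]].
have iB : i \in Bot s.
  rewrite inE; apply/existsP; exists i; rewrite eqxx andbT inE Ri andbT.
  by move: inot; rewrite /assigned inE.
have jB : j \notin Bot s.
  rewrite inE; apply/negP => /existsP [d /andP [dD /orP [/eqP E|pdj]]].
    move: dD; rewrite inE E; move: jin; rewrite /assigned inE => ->; by [].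
  apply: f; exists s, d, j; split => //.
  - by move: dD; rewrite /assigned !inE => /andP [].
  - by move: dD; rewrite !inE => /andP [].
move: pij; rewrite /prx /score (negbTE jB) iB /=.
have rj : enum_rank j < #|I| by apply: ltn_ord.
have hj := hh_lt s j.
move: rj hj; set n := #|I| => rj hj.
rewrite mul0n add0n mul1n => h.
have : (hh s j * n + enum_rank j) < (n + hh s i) * n + enum_rank i by nia.
move=> h'; by have := ltn_trans h h'; rewrite ltnn.
Qed.
End Ext.
End Proofs.

Theorem corollary3 (I S : finType) (hI : 3 <= #|I|)
  (P : I -> rel (option S)) (hP : forall i, total_order (P i))
  (q : S -> nat) (hq : forall s, 0 < q s)
  (pr : S -> rel I) (hpr : forall s, partial_order (pr s)) :
  exists pr' : S -> rel I,
    extension_profile pr pr' /\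
    (forall mu : I -> option S, SOSM P q pr' mu -> SOSM P q pr mu).
Proof.
have ext : forall mu, extension_profile pr (prx P pr mu).
  move=> mu s; split; [exact: prx_total | move=> i j; exact: prx_ext].
case: (classic (exists mu, stable P q pr mu)) => [[mu0 s0]|nost]; last first.
  exists (prx P pr (fun _ => None)); split; first exact: ext.
  move=> nu [snu _]; exfalso; apply: nost; exists nu.
  apply: stable_weaken snu => s x y; exact: prx_ext.
have [mu [smu mmax]] := exists_max s0.
exists (prx P pr mu); split; first exact: ext.
move=> nu [snu ndom].
have smu' := mu_stable_prx hpr smu.
have hN : forall i, ~~ P i (nu i) (mu i).
  move=> i; apply/negP => pi.
  have sj := join_stable hP (prx_total P pr mu) smu' snu.
  have sj' : stable P q pr (join P mu nu).
    by apply: stable_weaken sj => s x y; exact: prx_ext.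
  have hR : forall k, R_ P k (join P mu nu k) (mu k) by move=> k; apply: join_Rmu.
  have pj : P i (join P mu nu i) (mu i) by rewrite /join pi.
  have := mmax _ sj'; have := Phi_lt hP hR pj; lia.
have E : forall i, mu i = nu i.
  move=> i; apply/eqP; apply/negPn/negP => ne.
  apply: ndom; exists mu; split => //; split.
    move=> k; exact: (notP_R hP (hN k)).
  exists i; apply: R_neq ne; exact: (notP_R hP (hN i)).
have -> : nu = mu by apply: functional_extensionality => i; rewrite E.
split => // -[nu' [snu' [hR [j hj]]]].
have := mmax _ snu'; have := Phi_lt hP hR hj; lia.
Qed.
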